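(* Let $G$ be a graph of order $n$. The following are equivalent: (1) every component of $G$ with at least two vertices is a corona; (2) $\gamma_{\rm cer}(G)=n$; (3) $\Gamma_{\rm cer}(G)=n$.
   Context: All graphs are finite and simple. A set $D\subseteq V_G$ is a dominating set of $G$ if every vertex of $V_G-D$ has a neighbor in $D$. A set $D$ is a certified dominating set of $G$ if $D$ is dominating and every vertex of $D$ has either zero or at least two neighbors in $V_G-D$; it is minimal if no proper subset is a certified dominating set. $\gamma_{\rm cer}(G)$ is the minimum cardinality of a certified dominating set, and $\Gamma_{\rm cer}(G)$ is the maximum cardinality of a minimal certified dominating set. A graph is a corona if it equals $H\circ K_1$ for some graph $H$, i.e., it is obtained from $H$ by attaching one new pendant vertex to each vertex of $H$. *)

(* Defs.v *)
(* A finite simple graph is a symmetric irreflexive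
   relation e : rel T on a finite type T (vertex set = T, order n = #|T|). *)
From mathcomp Require Import all_boot.
Set Implicit Arguments. Unset Strict Implicit. Unset Printing Implicit Defensive.

Section Graph.
Variables (T : finType) (e : rel T).

Definition nbhd (v : T) : {set T} := [set u | e v u].

Definition dominating (D : {set T}) : bool :=
  [forall v, (v \notin D) ==> [exists u, (u \in D) && e v u]].

Definition certified (D : {set T}) : bool :=
  dominating D &&
  [forall v, (v \in D) ==> ((#|nbhd v :\: D| == 0) || (2 <= #|nbhd v :\: D|))].

Definition minimal_certified (D : {set T}) : bool :=
  certified D && [forall E : {set T}, (E \proper D) ==> ~~ certified E].

(* gamma_cer: minimum cardinality of a certified dominating set
   (V itself is always certified, so #|T| is a valid neutral upper bound) *)
Definition gamma_cer : nat :=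
  \big[minn/#|T|]_(D : {set T} | certified D) #|D|.

Definition Gamma_cer : nat :=
  \max_(D : {set T} | minimal_certified D) #|D|.

Definition component (v : T) : {set T} := [set u | connect e v u].

(* The subgraph induced by C is a corona H o K1: C splits into a set S
   (vertices of H) and a set f @: S of pendant vertices, f injective on S,
   each f s having s as its unique neighbour. *)
Definition is_corona (C : {set T}) : Prop :=
  exists (S : {set T}) (f : T -> T),
    [/\ S \subset C, {in S &, injective f},
        C = S :|: f @: S, [disjoint S & f @: S] &
        forall s, s \in S -> nbhd (f s) = [set s]].

End Graph.

(* Main.v *)
Require Import Defs.
From mathcomp Require Import all_boot.
Set Implicit Arguments. Unset Strict Implicit. Unset Printing Implicit Defensive.

Section Aux.
Variables (T : finType) (e : rel T).
Hypotheses (e_sym : symmetric e) (e_irr : irreflexive e).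

Definition deg (x : T) := #|nbhd e x|.

Lemma in_nbhd x y : (y \in nbhd e x) = e x y.
Proof. by rewrite inE. Qed.

Lemma ne1 n : ((n == 0) || (2 <= n)) = (n != 1).
Proof. by case: n => [|[|n]]. Qed.

Lemma certI (D : {set T}) : (forall v, v \notin D -> exists2 u, u \in D & e v u) ->
  (forall v, v \in D -> #|nbhd e v :\: D| != 1) -> certified e D.
Proof.
move=> H1 H2; apply/andP; split.
  apply/forallP=> v; apply/implyP=> /H1 [u uD evu]; apply/existsP; exists u.
  by rewrite uD.
by apply/forallP=> v; apply/implyP=> /H2; rewrite ne1.
Qed.

Lemma certE1 (D : {set T}) : certified e D -> forall v, v \notin D -> exists2 u, u \in D & e v u.
Proof.
move=> /andP[/forallP H _] v vD; move: (H v); rewrite vD /= => /existsP[u /andP[]].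
by exists u.
Qed.

Lemma certE2 (D : {set T}) : certified e D -> forall v, v \in D -> #|nbhd e v :\: D| != 1.
Proof.
by move=> /andP[_ /forallP H] v vD; move: (H v); rewrite vD ne1.
Qed.

Lemma card1_eq (A : {set T}) x : #|A| = 1 -> x \in A -> A = [set x].
Proof.
move=> /eqP /cards1P [y ->]; rewrite inE => /eqP ->; done.
Qed.

Lemma leaf_nb x y : deg x = 1 -> e x y -> nbhd e x = [set y].
Proof. by move=> dx exy; apply: card1_eq; rewrite ?in_nbhd. Qed.

Lemma leaf_uniq x y z : deg x = 1 -> e x y -> e x z -> y = z.
Proof.
move=> dx exy exz; have := leaf_nb dx exy => E.
by have := exz; rewrite -in_nbhd E inE => /eqP.
Qed.

Lemma conn_nb a b c : connect e a b -> e b c -> connect e a c.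
Proof. by move=> ab bc; apply: connect_trans ab (connect1 bc). Qed.

Lemma closed_sub (A : {set T}) v u : v \in A ->
  (forall x y, e x y -> x \in A -> y \in A) -> connect e v u -> u \in A.
Proof.
move=> vA cl cvu; have cA := intro_closed (sym_connect_sym e_sym) cl.
by rewrite -(closed_connect cA cvu).
Qed.

End Aux.
Section Dir1.
Variables (T : finType) (e : rel T).
Hypotheses (e_sym : symmetric e) (e_irr : irreflexive e).

Lemma corona_allT :
  (forall v : T, 2 <= #|component e v| -> is_corona e (component e v)) ->
  forall D : {set T}, certified e D -> D = setT.
Proof.
move=> P0 D cD; apply/setP=> v; rewrite inE; apply/negPn/negP=> vD.
have [u uD evu] := certE1 cD vD.
have uv : u != v by apply: contraTneq evu => ->; rewrite e_irr.
have vC : v \in component e v by rewrite inE connect0.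
have uC : u \in component e v by rewrite inE connect1.
have C2 : 2 <= #|component e v|.
  have: [set v; u] \subset component e v.
    by apply/subsetP=> x; rewrite !inE => /orP [] /eqP ->; rewrite -?inE.
  by move/subset_leq_card; rewrite cards2 eq_sym uv.
have [S [f [SC finj Ceq dis fnb]]] := P0 v C2.
have SD : forall s, s \in S -> s \in D.
  move=> s sS; apply/negPn/negP=> sD.
  have fD : f s \in D.
    apply/negPn/negP=> /(certE1 cD) [w wD ew].
    by move: ew; rewrite -in_nbhd fnb // inE => /eqP ws; move: wD; rewrite ws (negbTE sD).
  have E : [set s] :\: D = [set s].
    by apply/setP=> x; rewrite !inE andbC; case: eqP => // ->; rewrite sD.
  by have := certE2 cD fD; rewrite fnb // E cards1.
move: vC; rewrite Ceq => /setUP [/SD|/imsetP [s sS vfs]]; first by rewrite (negbTE vD).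
have esv : e s v by rewrite e_sym -in_nbhd vfs fnb // inE.
have E : nbhd e s :\: D = [set v]; last by have := certE2 cD (SD s sS); rewrite E cards1.
apply/setP=> w; rewrite !inE; apply/andP/eqP => [[wD esw]|->]; last by rewrite vD.
have wC : w \in component e v.
  have sC : s \in component e v by apply: (subsetP SC).
  by move: sC; rewrite !inE => /conn_nb; apply.
move: wC; rewrite Ceq => /setUP [/SD|/imsetP [t tS wft]]; first by rewrite (negbTE wD).
have ets : e w s by rewrite e_sym.
move: ets; rewrite -in_nbhd wft fnb // inE => /eqP ts.
by subst.
Qed.

End Dir1.
Section Dir2.
Variables (T : finType) (e : rel T).
Hypotheses (e_sym : symmetric e) (e_irr : irreflexive e).
Hypothesis allT : forall D : {set T}, certified e D -> D = setT.

Lemma noprop (D : {set T}) x : x \notin D -> certified e D -> False.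
Proof. by move=> xD /allT DT; move: xD; rewrite DT inE. Qed.

Lemma two_leaves s l1 l2 : e s l1 -> e s l2 -> deg e l1 = 1 -> deg e l2 = 1 -> l1 = l2.
Proof.
move=> e1 e2 d1 d2; apply/eqP/negPn/negP=> l12.
apply: (@noprop (~: [set l1; l2]) l1); first by rewrite !inE eqxx.
have f1 : e l1 s by rewrite e_sym.
have f2 : e l2 s by rewrite e_sym.
have n1 := leaf_nb d1 f1; have n2 := leaf_nb d2 f2.
have s1 : s != l1 by apply: contraTneq e1 => ->; rewrite e_irr.
have s2 : s != l2 by apply: contraTneq e2 => ->; rewrite e_irr.
apply: certI => [v|d].
  rewrite in_setC negbK !inE => /orP [] /eqP ->; by exists s; rewrite // !inE negb_or s1 s2.
rewrite !inE negb_or => /andP [dl1 dl2].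
case: (eqVneq d s) => [->|ds].
  suff -> : nbhd e s :\: ~: [set l1; l2] = [set l1; l2] by rewrite cards2 l12.
  apply/setP=> x; rewrite !inE negbK andbC.
  by apply/idP/idP => [/andP[]//|/orP[]/eqP->]; rewrite eqxx ?e1 ?e2 ?orbT.
suff -> : nbhd e d :\: ~: [set l1; l2] = set0 by rewrite cards0.
apply/setP=> x; rewrite !inE negbK; apply/negP => /andP [/orP [] /eqP -> ed].
  by move: ed; rewrite e_sym -in_nbhd n1 inE (negbTE ds).
by move: ed; rewrite e_sym -in_nbhd n2 inE (negbTE ds).
Qed.
End Dir2.
Section Dir3.
Variables (T : finType) (e : rel T).
Hypotheses (e_sym : symmetric e) (e_irr : irreflexive e).
Hypothesis allT : forall D : {set T}, certified e D -> D = setT.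

Lemma deg_pos x y : e x y -> 0 < deg e x.
Proof. by move=> exy; apply/card_gt0P; exists y; rewrite in_nbhd. Qed.

Lemma no_X x0 : 2 <= deg e x0 -> [exists l, e x0 l && (deg e l == 1)].
Proof.
move=> dx0; apply: contraT => nP0.
pose isP y := [exists l, e y l && (deg e l == 1)].
have isPI y l : e y l -> deg e l = 1 -> isP y.
  by move=> eyl dl; apply/existsP; exists l; rewrite eyl dl.
pose X := [set y | (2 <= deg e y) && ~~ isP y].
pose Y := [set y in X | 2 <= #|nbhd e y :&: X|].
pose indep (J : {set T}) := (J \subset Y) && [forall x in J, forall y in J, ~~ e x y].
have ind0 : indep set0.
  by rewrite /indep sub0set; apply/forall_inP => x; rewrite inE.
have [J mJ _] := maxset_exists ind0.
move/maxsetP: mJ => [/andP [JY Jind] Jmax].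
have indJ x y : x \in J -> y \in J -> ~~ e x y.
  by move=> xJ yJ; move/forall_inP: Jind => /(_ x xJ) /forall_inP; apply.
have JX : J \subset X by apply: subset_trans JY _; apply/subsetP=> y; rewrite inE => /andP[].
have Jmax' w : w \in Y -> w \notin J -> exists2 j, j \in J & e w j.
  move=> wY wJ; case: (boolP [exists j in J, e w j]) => [/exists_inP [j jJ ewj]|nj].
    by exists j.
  exfalso; move: nj; rewrite negb_exists_in => /forall_inP nj.
  have iw : indep (w |: J).
    apply/andP; split; first by rewrite subUset sub1set wY JY.
    apply/forall_inP => x /setU1P xJ; apply/forall_inP => y /setU1P yJ.
    case: xJ => [->|xJ]; case: yJ => [->|yJ].
    - by rewrite e_irr.
    - by apply: nj.
    - by rewrite e_sym; apply: nj.
    - by apply: indJ.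
  have := Jmax _ iw (subsetUr _ _) => E.
  by move: wJ; rewrite -E setU11.
pose W := X :\: J.
pose L1 := [set l | (deg e l == 1) && [exists s, e l s && (#|nbhd e s :&: W| == 1)]].
pose U := W :|: L1.
have [u uU] : exists u, u \in U.
  have x0X : x0 \in X by rewrite inE dx0 nP0.
  case: (boolP (x0 \in J)) => x0J; last by exists x0; rewrite in_setU in_setD x0J x0X.
  have : x0 \in Y by apply: (subsetP JY).
  rewrite inE => /andP [_ c2].
  have /card_gt0P [y] : 0 < #|nbhd e x0 :&: X| by apply: leq_trans c2.
  rewrite in_setI in_nbhd => /andP [ex0y yX].
  exists y; rewrite in_setU in_setD yX andbT; apply/orP; left.
  by apply: contraL ex0y => yJ; exact: indJ x0J yJ.
exfalso; apply: (@noprop _ _ allT (~: U) u); first by rewrite inE negbK.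
apply: certI => [v|d].
  rewrite in_setC negbK in_setU => /orP [vW|vL].
    move: vW; rewrite in_setD => /andP [vJ vX].
    move: (vX); rewrite inE => /andP [dv nPv].
    case: (boolP [exists p, e v p && isP p]) => [/existsP [p /andP [evp pP]] | np].
      exists p => //; rewrite in_setC in_setU negb_or; apply/andP; split.
        by rewrite in_setD negb_and; apply/orP; right; rewrite inE pP andbF.
      rewrite inE negb_and; apply/orP; left; apply/eqP => dp.
      move/existsP: pP => [l /andP [epl /eqP dl]].
      have evl : v = l by apply: (leaf_uniq dp) => //; rewrite e_sym.
      by move: dv; rewrite evl dl.
    have vY : v \in Y.
      rewrite inE vX /=.
      suff -> : nbhd e v :&: X = nbhd e v by [].
      apply/setIidPl/subsetP => y; rewrite in_nbhd => evy; rewrite inE.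
      have nPy : ~~ isP y.
        by apply: contra np => Py; apply/existsP; exists y; rewrite evy.
      rewrite nPy andbT; have : e y v by rewrite e_sym.
      move=> /deg_pos.
      rewrite leq_eqVlt => /orP [/eqP d1|//].
      by move: nPv; rewrite (isPI v y evy (esym d1)).
    have [j jJ evj] := Jmax' v vY vJ.
    exists j => //; rewrite in_setC in_setU negb_or in_setD jJ /= inE negb_and.
    have : j \in X by apply: (subsetP JX).
    by rewrite inE => /andP [dj _]; apply/orP; left; apply: contraTneq dj => ->.
  move: vL; rewrite inE => /andP [/eqP dv /existsP [s /andP [evs /eqP cs]]].
  have sW : s \notin W.
    rewrite in_setD negb_and; apply/orP; right; rewrite inE negb_and negbK.
    by apply/orP; right; apply: (isPI s v) => //; rewrite e_sym.
  exists s => //; rewrite in_setC in_setU negb_or sW /= inE negb_and.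
  apply/orP; left; apply/eqP => ds.
  have nbs : nbhd e s = [set v] by apply: leaf_nb => //; rewrite e_sym.
  move: cs; rewrite nbs => cs.
  have : 0 < #|[set v] :&: W| by rewrite cs.
  move/card_gt0P => [x]; rewrite in_setI in_set1 in_setD => /andP [/eqP -> /andP [_]].
  by rewrite inE dv.
rewrite in_setC in_setU negb_or => /andP [dW dL].
rewrite setDE setCK.
have XW y : y \in X -> y \notin J -> y \in U.
  by move=> yX yJ; rewrite in_setU in_setD yX yJ.
case: (ltngtP (deg e d) 1) => [d0|d2|d1].
- have : #|nbhd e d :&: U| <= 0.
    apply: leq_trans (subset_leq_card (subsetIl _ _)) _.
    by rewrite -ltnS.
  by rewrite leqn0 => /eqP ->.
- move: (d2) => d2'.
  case: (boolP (isP d)) => Pd.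
  + move/existsP: (Pd) => [l /andP [edl /eqP dl]].
    case: (eqVneq #|nbhd e d :&: W| 1) => cW.
    * move/eqP/cards1P: (cW) => [w Ew].
      have : w \in nbhd e d :&: W by rewrite Ew inE.
      rewrite in_setI in_nbhd => /andP [edw wW].
      have lL : l \in L1.
        rewrite inE dl eqxx /=; apply/existsP; exists d; rewrite e_sym edl /=.
        by rewrite cW.
      have wl : w != l.
        apply: contraTneq wW => ->; rewrite in_setD inE dl /=; by rewrite andbF.
      have : [set w; l] \subset nbhd e d :&: U.
        apply/subsetP => x; rewrite in_set2 => /orP [] /eqP ->.
          by rewrite in_setI in_nbhd in_setU edw wW.
        by rewrite in_setI in_nbhd in_setU edl lL orbT.
      move/subset_leq_card; rewrite cards2 wl.
      by case: #|_| => [|[|]].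
    * suff -> : nbhd e d :&: U = nbhd e d :&: W by [].
      apply/setP => y; rewrite !in_setI in_setU in_nbhd.
      case edy: (e d y) => //=.
      case yW: (y \in W) => //=; apply/negbTE.
      rewrite inE negb_and; apply/orP; case: (eqVneq (deg e y) 1) => dy; [right|by left].
      apply/existsP => -[s /andP [eys /eqP cs]].
      have sd : s = d by apply: (leaf_uniq dy) => //; rewrite e_sym.
      by move: cW; rewrite -sd cs.
  + have dX : d \in X by rewrite inE d2' Pd.
    have dJ : d \in J by move: dW; rewrite in_setD dX andbT negbK.
    have : d \in Y by apply: (subsetP JY).
    rewrite inE => /andP [_ c2].
    have : nbhd e d :&: X \subset nbhd e d :&: U.
      apply/subsetP => y; rewrite !in_setI => /andP [edy yX]; rewrite edy /=.
      apply: XW => //; apply: contraL edy => yJ; rewrite in_nbhd; exact: indJ dJ yJ.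
    move/subset_leq_card => c3.
    by apply/eqP => c1; move: (leq_trans c2 c3); rewrite c1.
- move/eqP/cards1P: (d1) => [s Es].
  have eds : e d s by rewrite -in_nbhd Es inE.
  have sW : s \notin W.
    rewrite in_setD negb_and; apply/orP; right; rewrite inE negb_and negbK.
    by apply/orP; right; apply: (isPI s d) => //; rewrite e_sym.
  have sL : s \notin L1.
    rewrite inE negb_and; apply/orP; case: (eqVneq (deg e s) 1) => ds; [right|by left].
    apply/existsP => -[t /andP [est /eqP ct]].
    have td : t = d by apply: (leaf_uniq ds) => //; rewrite e_sym.
    move: ct; rewrite td Es => ct.
    have : 0 < #|[set s] :&: W| by rewrite ct.
    move/card_gt0P => [x]; rewrite in_setI in_set1 => /andP [/eqP ->].
    by rewrite (negbTE sW).
  suff -> : nbhd e d :&: U = set0 by rewrite cards0.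
  apply/setP => x; rewrite Es in_setI in_set1 in_setU in_set0.
  by case: eqP => //= ->; rewrite (negbTE sW) (negbTE sL).
Qed.
End Dir3.
Section Dir4.
Variables (T : finType) (e : rel T).
Hypotheses (e_sym : symmetric e) (e_irr : irreflexive e).
Hypothesis allT : forall D : {set T}, certified e D -> D = setT.

Lemma allT_corona v : 2 <= #|component e v| -> is_corona e (component e v).
Proof.
move=> C2; set C := component e v.
have csym := sym_connect_sym e_sym.
have connC x y : x \in C -> y \in C -> connect e x y.
  rewrite !inE => vx vy; apply: connect_trans vy; by rewrite csym.
have nbC x y : x \in C -> e x y -> y \in C.
  by rewrite !inE => vx exy; apply: conn_nb vx exy.
have degC x : x \in C -> 0 < deg e x.
  move=> xC; rewrite lt0n; apply/negP => /eqP /cards0_eq n0.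
  have : C \subset [set x].
    apply/subsetP => y yC; apply: (closed_sub e_sym (v := x)) (connC _ _ xC yC).
      by rewrite inE.
    move=> a b eab; rewrite inE => /eqP ax; move: eab; rewrite ax -in_nbhd n0 inE.
    by rewrite in_set0.
  by move/subset_leq_card; rewrite cards1 leqNgt C2.
case: (boolP [exists x in C, 2 <= deg e x]) => [/exists_inP [x0 x0C dx0] | nd].
  pose S := [set x in C | 2 <= deg e x].
  pose f := fun s => odflt s [pick l | e s l && (deg e l == 1)].
  have fP s : 2 <= deg e s -> e s (f s) /\ deg e (f s) = 1.
    move=> ds; rewrite /f; case: pickP => [l /andP [esl /eqP dl]|np]; first done.
    exfalso; move/existsP: (no_X e_sym e_irr allT ds) => [l H].
    by move: (np l); rewrite H.
  have SdP s : s \in S -> s \in C /\ 2 <= deg e s.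
    by rewrite inE => /andP [].
  exists S, f; split.
  - by apply/subsetP => s /SdP [].
  - move=> s t /SdP [_ /fP [es1 ds1]] /SdP [_ /fP [et1 dt1]] fst.
    apply: (leaf_uniq ds1); first by rewrite e_sym.
    by rewrite fst e_sym.
  - apply/setP => w; apply/idP/idP => [wC|].
      rewrite in_setU; case: (leqP 2 (deg e w)) => dw.
        by rewrite inE wC dw.
      have dw1 : deg e w = 1 by apply/eqP; rewrite eqn_leq -ltnS dw degC.
      move/eqP/cards1P: (dw1) => [s Es].
      have ews : e w s by rewrite -in_nbhd Es inE.
      have sC := nbC _ _ wC ews.
      have ds : 2 <= deg e s.
        rewrite leqNgt; apply/negP => ds.
        have ds1 : deg e s = 1 by apply/eqP; rewrite eqn_leq -ltnS ds degC.
        have : x0 \in [set w; s].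
          apply: (closed_sub e_sym (v := w)) (connC _ _ wC x0C); first by rewrite !inE eqxx.
          move=> a b eab; rewrite in_set2 => /orP [] /eqP ea; subst a.
            by rewrite (leaf_uniq dw1 eab ews) !inE eqxx orbT.
          have esw : e s w by rewrite e_sym.
          by rewrite -(leaf_uniq ds1 esw eab) !inE eqxx.
        by rewrite in_set2 => /orP [] /eqP ex; move: dx0; rewrite ex ?dw1 ?ds1.
      have [esf dsf] := fP s ds.
      apply/orP; right; apply/imsetP; exists s; first by rewrite inE sC ds.
      apply: (two_leaves e_sym e_irr allT (s := s)) => //; by rewrite e_sym.
    rewrite in_setU => /orP [/SdP [] //|/imsetP [s /SdP [sC /fP [esf _]] ->]].
    exact: nbC sC esf.
  - rewrite disjoint_subset; apply/subsetP => x /SdP [_ dx]; rewrite inE.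
    apply/negP => /imsetP [s /SdP [_ /fP [_ dsf]] xf].
    by move: dx; rewrite xf dsf.
  - move=> s /SdP [_ /fP [esf dsf]]; apply: leaf_nb => //; by rewrite e_sym.
have vC : v \in C by rewrite inE connect0.
have d1 x : x \in C -> deg e x = 1.
  move=> xC; apply/eqP; rewrite eqn_leq degC // andbT -ltnS ltnNge.
  by apply: contra nd => dx; apply/exists_inP; exists x.
have dv := d1 v vC.
move/eqP/cards1P: (dv) => [u Eu].
have evu : e v u by rewrite -in_nbhd Eu inE.
have uC := nbC _ _ vC evu.
have du := d1 u uC.
have euv : e u v by rewrite e_sym.
exists [set v], (fun _ => u); split.
- by rewrite sub1set.
- by move=> a b; rewrite !inE => /eqP -> /eqP ->.
- rewrite imset_set1; apply/setP => w; apply/idP/idP => [wC|].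
    apply: (closed_sub e_sym (v := v)); first by rewrite !inE eqxx.
      move=> a b eab; rewrite !inE => /orP [] /eqP ea; subst a.
        by rewrite (leaf_uniq dv eab evu) eqxx orbT.
      by rewrite (leaf_uniq du eab euv) eqxx.
    by move: wC; rewrite inE.
  by rewrite !inE => /orP [] /eqP ->; rewrite -?inE.
- rewrite disjoint_subset; apply/subsetP => x; rewrite !inE => /eqP ->.
  rewrite imset_set1 in_set1; by apply: contraTneq evu => ->; rewrite e_irr.
- by move=> s; rewrite inE => /eqP ->; exact: leaf_nb du euv.
Qed.
End Dir4.
Lemma certT (T : finType) (e : rel T) : certified e setT.
Proof.
apply: certI => [v|v _]; first by rewrite inE.
suff -> : nbhd e v :\: setT = set0 by rewrite cards0.
by apply/setP => x; rewrite !inE.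
Qed.

Lemma fold_min (I : eqType) (r : seq I) (P : pred I) (F : I -> nat) idx x :
  x \in r -> P x -> \big[minn/idx]_(i <- r | P i) F i <= F x.
Proof.
elim: r => //= y r IH; rewrite inE big_cons => /orP [/eqP <- ->|xr Px].
  exact: geq_minl.
case: (P y); last exact: IH.
by apply: leq_trans (geq_minr _ _) (IH xr Px).
Qed.

Unset Implicit Arguments.
Theorem theorem3p2 (T : finType) (e : rel T)
    (e_sym : symmetric e) (e_irr : irreflexive e) :
  [<-> (forall v : T, 2 <= #|component e v| -> is_corona e (component e v));
       gamma_cer e = #|T|;
       Gamma_cer e = #|T| ].
Proof.
have ToT (D : {set T}) : #|T| <= #|D| -> D = setT.
  by move=> c; apply/eqP; rewrite eqEcard subsetT cardsT c.
have gam_allT : gamma_cer e = #|T| -> forall D : {set T}, certified e D -> D = setT.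
  move=> g D cD; apply: ToT; rewrite -g /gamma_cer.
  by apply: fold_min => //; rewrite mem_index_enum.
have allT_min : (forall D : {set T}, certified e D -> D = setT) -> minimal_certified e setT.
  move=> aT; rewrite /minimal_certified certT /=; apply/forall_inP => E pE.
  by apply/negP => /aT EE; move: pE; rewrite EE properxx.
tfae.
- move=> P0; have aT := corona_allT e_sym e_irr P0.
  rewrite /gamma_cer; apply: (big_ind (fun m => m = #|T|)) => //.
    by move=> x y -> ->; rewrite minnn.
  by move=> D /aT ->; rewrite cardsT.
- move=> /gam_allT aT; apply/eqP; rewrite eqn_leq; apply/andP; split.
    rewrite /Gamma_cer; apply/bigmax_leqP => D _; rewrite -cardsT; apply: subset_leq_card; exact: subsetT.
  rewrite -cardsT /Gamma_cer.
  exact: (@leq_bigmax_cond _ (minimal_certified e) (fun D : {set T} => #|D|) setT (allT_min aT)).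
- move=> G; apply: allT_corona => //.
  case: (posnP #|T|) => [n0|npos].
    move=> D _; apply/setP => x; have : 0 < #|T| by apply/card_gt0P; exists x.
    by rewrite n0.
  have : Gamma_cer e = 0 \/ exists2 D, minimal_certified e D & Gamma_cer e = #|D|.
    rewrite /Gamma_cer; apply: (big_ind (fun m => m = 0 \/ exists2 D, minimal_certified e D & m = #|D|)).
    + by left.
    + move=> x y Hx Hy /=; case: (leqP x y) => xy.
        by [].
      by [].
    + by move=> D mD; right; exists D.
  rewrite G => -[n0|[D mD cD]]; first by move: npos; rewrite n0.
  have DT : D = setT by apply: ToT; rewrite cD.
  move: mD; rewrite DT => /andP [_ /forall_inP H] E cE.
  apply/eqP; apply: contraT => nE.
  by move: (H E); rewrite properT nE => /(_ isT); rewrite cE.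
Qed.
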